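(* Let $(W,S)$ be a Coxeter system with $S$ finite and let $A_W=\langle a_s\ (s\in S)\mid (a_sa_t)_{m(s,t)}=(a_ta_s)_{m(s,t)}\ (s,t\in S,\ s\neq t,\ m(s,t)<\infty)\rangle$ be the associated Artin group. Then the assignment $a_s\mapsto e_s$ ($s\in S$) yields a well-defined surjective homomorphism $\psi:A_W\to\operatorname{Ad}(Q_W)$.
   Context: A Coxeter system $(W,S)$: $S$ finite, $m:S\times S\to\mathbb{N}\cup\{\infty\}$ with $m(s,s)=1$, $2\le m(s,t)=m(t,s)\le\infty$ for $s\ne t$, and $W=\langle s\in S\mid (st)^{m(s,t)}=1\ (m(s,t)<\infty)\rangle$. For group elements $g,h$ and an integer $m\ge2$, $(gh)_m$ denotes the alternating product $ghgh\cdots$ with $m$ factors. The Coxeter quandle $Q_W=\bigcup_{w\in W}w^{-1}Sw$ has operation $x\ast y=yxy$, and $\operatorname{Ad}(Q_W)=\langle e_x\ (x\in Q_W)\mid e_y^{-1}e_xe_y=e_{x\ast y}\ (x,y\in Q_W)\rangle$. *)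

(* Defs.v *)
From mathcomp Require Import all_boot.
Set Implicit Arguments. Unset Strict Implicit. Unset Printing Implicit Defensive.

(* A word in the free group on X: letters (x, b) with b = true meaning x^{-1}. *)
Definition word (X : Type) := seq (X * bool).

Definition winv (X : Type) (w : word X) : word X :=
  rev (map (fun p => (p.1, ~~ p.2)) w).

Inductive pres_eq (X : Type) (R : word X -> word X -> Prop) : word X -> word X -> Prop :=
| pe_refl w : pres_eq R w w
| pe_sym u v : pres_eq R u v -> pres_eq R v u
| pe_trans u v w : pres_eq R u v -> pres_eq R v w -> pres_eq R u w
| pe_rel u v a b : R a b -> pres_eq R (u ++ a ++ v) (u ++ b ++ v)
| pe_cancel u v x b : pres_eq R (u ++ [:: (x, b); (x, ~~ b)] ++ v) (u ++ v).

Fixpoint alt (X : Type) (g h : word X) (m : nat) : word X :=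
  if m is m'.+1 then g ++ alt h g m' else [::].

Definition gen (X : Type) (x : X) : word X := [:: (x, false)].

(* Coxeter matrix on a finite set S; None encodes m(s,t) = infinity. *)
Definition coxeter_matrix (S : finType) (m : S -> S -> option nat) : Prop :=
  (forall s, m s s = Some 1%N) /\
  (forall s t, m s t = m t s) /\
  (forall s t k, s != t -> m s t = Some k -> 2 <= k).

Definition coxeter_rel (S : finType) (m : S -> S -> option nat)
  (a b : word S) : Prop :=
  exists s t k, m s t = Some k /\ a = alt (gen s) (gen t) (2 * k) /\ b = [::].

Definition W_eq S m := pres_eq (@coxeter_rel S m).

Definition artin_rel (S : finType) (m : S -> S -> option nat)
  (a b : word S) : Prop :=
  exists s t k, s != t /\ m s t = Some k /\
    a = alt (gen s) (gen t) k /\ b = alt (gen t) (gen s) k.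

Definition A_eq S m := pres_eq (@artin_rel S m).

(* Elements of Q_W are represented by pairs (w, s), standing for w^{-1} s w in W
   (w a word over S).  Every element of Q_W has such a representative. *)
Definition qrep (S : finType) := (word S * S)%type.

Definition qword (S : finType) (p : qrep S) : word S :=
  winv p.1 ++ gen p.2 ++ p.1.

(* Relations of Ad(Q_W), generators e_p indexed by representatives:
   - e_p = e_r whenever p and r represent the same element of Q_W;
   - e_y^{-1} e_x e_y = e_z whenever z represents x * y = y x y in W. *)
Definition ad_rel (S : finType) (m : S -> S -> option nat)
  (a b : word (qrep S)) : Prop :=
  (exists p r, W_eq m (qword p) (qword r) /\ a = gen p /\ b = gen r) \/
  (exists x y z, W_eq m (qword z) (qword y ++ qword x ++ qword y) /\
     a = [:: (y, true); (x, false); (y, false)] /\ b = gen z).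

Definition Ad_eq S m := pres_eq (@ad_rel S m).

Definition psi (S : finType) (w : word S) : word (qrep S) :=
  map (fun l => (([::] : word S, l.1), l.2)) w.

(* Main.v *)
Require Import Defs.
From mathcomp Require Import all_boot.
Set Implicit Arguments. Unset Strict Implicit. Unset Printing Implicit Defensive.

Lemma petr (X : Type) (R : word X -> word X -> Prop) (v u w : word X) :
  pres_eq R u v -> pres_eq R v w -> pres_eq R u w.
Proof. exact: pe_trans. Qed.
Arguments petr {X R} v {u w}.

Section Gen.
Variables (X : Type) (R : word X -> word X -> Prop).

Lemma pe_ctx a b u v : pres_eq R a b -> pres_eq R (u ++ a ++ v) (u ++ b ++ v).
Proof.
move=> H; elim: H u v => {a b}.
- by move=> w u v; apply: pe_refl.
- by move=> a b _ IH u v; apply: pe_sym.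
- by move=> a b c _ IH1 _ IH2 u v; apply: pe_trans (IH1 u v) (IH2 u v).
- move=> u0 v0 a b Hab u v.
  have E : forall z, u ++ (u0 ++ z ++ v0) ++ v = (u ++ u0) ++ z ++ (v0 ++ v).
    by move=> z; rewrite !catA.
  rewrite !E; exact: pe_rel.
- move=> u0 v0 x b u v.
  have E : forall z, u ++ (u0 ++ z ++ v0) ++ v = (u ++ u0) ++ z ++ (v0 ++ v).
    by move=> z; rewrite !catA.
  rewrite E.
  have -> : u ++ (u0 ++ v0) ++ v = (u ++ u0) ++ (v0 ++ v) by rewrite !catA.
  exact: pe_cancel.
Qed.

Lemma pe_cat a b c d : pres_eq R a b -> pres_eq R c d -> pres_eq R (a ++ c) (b ++ d).
Proof.
move=> H1 H2; apply: (petr (b ++ c)).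
  exact: (pe_ctx [::] c H1).
have := pe_ctx b [::] H2; by rewrite ?cats0.
Qed.

Lemma winv_cat (a b : word X) : winv (a ++ b) = winv b ++ winv a.
Proof. by rewrite /winv map_cat rev_cat. Qed.

Lemma winvK (w : word X) : winv (winv w) = w.
Proof.
rewrite /winv -map_rev revK -map_comp.
by elim: w => //= [[x b] w IH]; rewrite /= negbK IH.
Qed.

Lemma inv_l (w : word X) : pres_eq R (winv w ++ w) [::].
Proof.
elim: w => [|[y b] w IH] /=; first exact: pe_refl.
have -> : winv ((y, b) :: w) ++ (y, b) :: w =
  winv w ++ [:: (y, ~~ b); (y, ~~ ~~ b)] ++ w.
  by rewrite (winv_cat [:: (y,b)] w) -catA negbK.
exact: pe_trans (pe_cancel _ _ _ _ _) IH.
Qed.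

Lemma inv_r (w : word X) : pres_eq R (w ++ winv w) [::].
Proof. have := inv_l (winv w); by rewrite winvK. Qed.

End Gen.

Fixpoint altS (S : Type) (g h : S) n : seq S :=
  if n is n'.+1 then g :: altS h g n' else [::].

Lemma altS_cat (S : Type) (g h : S) a b :
  altS g h (a + b) = altS g h a ++ (if odd a then altS h g b else altS g h b).
Proof.
elim: a g h => [|a IH] g h //=.
rewrite IH; by case: (odd a).
Qed.

Lemma altS_snoc (S : Type) (g h : S) n :
  altS g h n.+1 = altS g h n ++ [:: if odd n then h else g].
Proof. rewrite -addn1 altS_cat; by case: (odd n). Qed.

Lemma alt_cat (S : Type) (g h : word S) a b :
  alt g h (a + b) = alt g h a ++ (if odd a then alt h g b else alt g h b).
Proof.
elim: a g h => [|a IH] g h //=.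
rewrite IH -catA; by case: (odd a).
Qed.

Lemma alt_snoc (S : Type) (g h : word S) n :
  alt g h n.+1 = alt g h n ++ (if odd n then h else g).
Proof. rewrite -addn1 alt_cat /=; by case: (odd n); rewrite ?cats0. Qed.

Lemma altS_rev (S : Type) (g h : S) n :
  rev (altS g h n) = if odd n then altS g h n else altS h g n.
Proof.
elim: n g h => [|n IH] g h; first by [].
rewrite (_ : rev (altS g h n.+1) = rev (altS h g n) ++ [:: g]);
  last by rewrite cats1 -rev_cons.
rewrite IH (_ : odd n.+1 = ~~ odd n) //.
case E: (odd n).
- by rewrite (altS_snoc h g n) E.
- by rewrite (altS_snoc g h n) E.
Qed.

Lemma fst_alt (S : Type) (g h : S) n :
  map fst (alt (gen g) (gen h) n) = altS g h n.
Proof. by elim: n g h => [|n IH] g h //=; rewrite IH. Qed.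

Lemma map_fst_winv (S : Type) (w : word S) : map fst (winv w) = rev (map fst w).
Proof. by rewrite /winv map_rev -map_comp. Qed.

Lemma psi_winv (S : finType) (w : word S) : psi (winv w) = winv (psi w).
Proof. by rewrite /psi /winv map_rev -!map_comp. Qed.

Lemma psi_cat (S : finType) (a b : word S) : psi (a ++ b) = psi a ++ psi b.
Proof. by rewrite /psi map_cat. Qed.

Section Cox.
Variables (S : finType) (m : S -> S -> option nat).
Hypothesis Hm : forall s, m s s = Some 1%N.

Lemma W_ss s : W_eq m [:: (s,false); (s,false)] [::].
Proof.
have H : coxeter_rel m (alt (gen s) (gen s) 2) [::].
  by exists s, s, 1%N; split; [apply: Hm|].
by have := pe_rel [::] [::] H; rewrite /= ?cats0.
Qed.

Lemma W_flip s : W_eq m [:: (s,true)] [:: (s,false)].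
Proof.
apply: (petr [:: (s,true); (s,false); (s,false)]).
  apply: pe_sym; have := pe_ctx [:: (s,true)] [::] (W_ss s); by rewrite /=.
exact: (pe_cancel _ [::] [:: (s,false)] s true).
Qed.

Lemma W_fst (u v : word S) : map fst u = map fst v -> W_eq m u v.
Proof.
elim: u v => [|[x b] u IH] [|[y c] v] //=; first by move=> _; apply: pe_refl.
case=> Exy Euv; subst y.
apply: (pe_cat (a := [:: (x,b)]) (b := [:: (x,c)])); last exact: IH.
case: b; case: c; try exact: pe_refl; first exact: W_flip.
exact: pe_sym (W_flip x).
Qed.

Lemma conj1 (p : qrep S) l :
  Ad_eq m (winv (psi [:: l]) ++ gen p ++ psi [:: l]) (gen (p.1 ++ [:: l], p.2)).
Proof.
case: p => w x; case: l => s b.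
set e : qrep S := ([::], s).
case: b => /=.
- set z : qrep S := (w ++ [:: (s,true)], x).
  have H : ad_rel m [:: (e,true); (z,false); (e,false)] (gen (w, x)).
    right; exists z, e, (w, x); split => //.
    apply: (petr ([:: (s,false); (s,false)] ++ (qword (w,x) ++ [:: (s,false); (s,false)]))).
      apply: pe_sym.
      apply: (petr (qword (w,x) ++ [:: (s,false); (s,false)])).
        exact: (pe_ctx [::] _ (W_ss s)).
      have := pe_ctx (qword (w,x)) [::] (W_ss s); by rewrite ?cats0.
    apply: W_fst.
    rewrite /qword /= ?map_cat ?map_fst_winv ?map_cat /= ?rev_cat /=.
    by rewrite ?map_cat /= -?catA /= -?catA.
  have H1 : Ad_eq m (gen (w,x)) [:: (e,true); (z,false); (e,false)].
    apply: pe_sym; by have := pe_rel [::] [::] H; rewrite /= ?cats0.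
  have H2 := pe_ctx [:: (e,false)] [:: (e,true)] H1.
  rewrite /= in H2.
  apply: pe_trans H2 _.
  apply: (petr [:: (z,false); (e,false); (e,true)]).
    exact: (pe_cancel _ [::] [:: (z,false); (e,false); (e,true)] e false).
  have := pe_cancel (ad_rel m) [:: (z,false)] [::] e false; by rewrite /= .
- set z : qrep S := (w ++ [:: (s,false)], x).
  have H : ad_rel m [:: (e,true); ((w,x),false); (e,false)] (gen z).
    right; exists (w,x), e, z; split => //.
    apply: W_fst.
    rewrite /qword /= ?map_cat ?map_fst_winv ?map_cat /= ?rev_cat /=.
    by rewrite ?map_cat /= -?catA /= -?catA.
  by have := pe_rel [::] [::] H; rewrite /= ?cats0.
Qed.

Lemma conj (g : word S) (p : qrep S) :
  Ad_eq m (winv (psi g) ++ gen p ++ psi g) (gen (p.1 ++ g, p.2)).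
Proof.
elim: g p => [|l g IH] p.
  rewrite /= ?cats0; case: p => w x; rewrite /= ?cats0; exact: pe_refl.
have -> : psi (l :: g) = psi [:: l] ++ psi g by [].
rewrite winv_cat.
have H := pe_ctx (winv (psi g)) (psi g) (conj1 p l).
rewrite -!catA in H.
rewrite -!catA.
apply: pe_trans H _.
have := IH (p.1 ++ [:: l], p.2); by rewrite /= -catA.
Qed.

Lemma braid s t k : m s t = Some k.+1 ->
  Ad_eq m (psi (alt (gen s) (gen t) k.+1)) (psi (alt (gen t) (gen s) k.+1)).
Proof.
move=> Hst.
set A := alt (gen s) (gen t) k.
set x := if odd k then t else s.
have E1 : alt (gen s) (gen t) k.+1 = A ++ gen x.
  by rewrite alt_snoc /x; case: (odd k).
have E2 : alt (gen t) (gen s) k.+1 = gen t ++ A by [].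
rewrite E1 E2 !psi_cat.
have HW : W_eq m (qword (winv A, x)) (qword ([::], t)).
  set B := alt (gen s) (gen t) (k.+1 + k).
  apply: (petr B).
    apply: W_fst.
    rewrite /qword; cbn [fst snd]; rewrite winvK catA -E1 map_cat map_fst_winv /A /B !fst_alt altS_rev altS_cat.
    rewrite (_ : odd k.+1 = ~~ odd k) //; by case: (odd k).
  have HB : coxeter_rel m (B ++ gen t) [::].
    exists s, t, k.+1; split => //; split => //.
    have Ho : odd (k.+1 + k) by rewrite addSn /= addnn odd_double.
    rewrite (_ : 2 * k.+1 = (k.+1 + k).+1); last by rewrite mul2n -addnn addSn addnS.
    by rewrite alt_snoc Ho.
  rewrite /qword /= ?cats0.
  apply: (petr (B ++ [:: (t,false); (t,false)])).
    apply: pe_sym; have := pe_ctx B [::] (W_ss t); by rewrite ?cats0.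
  have := pe_ctx [::] (gen t) (pe_rel [::] [::] HB); by rewrite /= ?cats0 -catA.
have Hk : Ad_eq m (psi A ++ psi (gen x) ++ winv (psi A)) (psi (gen t)).
  have H := conj (winv A) ([::], x).
  rewrite psi_winv winvK /= in H.
  apply: pe_trans H _.
  have H' : ad_rel m (gen (winv A, x)) (gen ([::], t)).
    by left; exists (winv A, x), ([::], t).
  by have := pe_rel [::] [::] H'; rewrite /= ?cats0.
apply: (petr ((psi A ++ psi (gen x) ++ winv (psi A)) ++ psi A)).
  rewrite -!catA.
  apply: pe_sym; have := pe_ctx (psi A ++ psi (gen x)) [::] (inv_l _ (psi A)).
  by rewrite ?cats0 -!catA.
exact: pe_cat Hk (pe_refl _ _).
Qed.

Lemma letter (p : qrep S) : exists c, Ad_eq m (gen p) (psi c).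
Proof.
exists (winv p.1 ++ gen p.2 ++ p.1).
rewrite !psi_cat psi_winv; apply: pe_sym.
have := conj p.1 ([::], p.2); by case: p.
Qed.

Lemma letter_inv (p : qrep S) : exists c, Ad_eq m [:: (p, true)] (psi c).
Proof.
case: (letter p) => c Hc; exists (winv c).
rewrite psi_winv.
apply: (petr ([:: (p,true)] ++ psi c ++ winv (psi c))).
  apply: pe_sym; have := pe_ctx [:: (p,true)] [::] (inv_r _ (psi c)).
  by rewrite ?cats0.
apply: (petr ([:: (p,true)] ++ gen p ++ winv (psi c))).
  exact: pe_ctx (pe_sym Hc).
exact: (pe_cancel _ [::] _ p true).
Qed.

End Cox.

Theorem proposition3p3 (S : finType) (m : S -> S -> option nat) :
  coxeter_matrix m ->
  (forall u v : word S, A_eq m u v -> Ad_eq m (psi u) (psi v)) /\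
  (forall w : word (qrep S), exists u : word S, Ad_eq m w (psi u)).
Proof.
case=> Hm _; split.
- move=> u v H; elim: H => {u v}.
  + by move=> w; apply: pe_refl.
  + by move=> u v _ IH; apply: pe_sym.
  + by move=> u v w _ IH1 _ IH2; apply: pe_trans IH2.
  + move=> u v a b [s [t [k [_ [Hst [-> ->]]]]]].
    rewrite !psi_cat; apply: pe_ctx.
    case: k Hst => [|k] Hst; first exact: pe_refl.
    exact: braid.
  + move=> u v x b; rewrite !psi_cat; exact: pe_cancel.
- elim=> [|[p b] w [u IH]]; first by exists [::]; apply: pe_refl.
  have [c Hc] : exists c, Ad_eq m [:: (p, b)] (psi c).
    by case: b; [apply: letter_inv | apply: letter].
  exists (c ++ u); rewrite psi_cat.
  exact: (pe_cat (a := [:: (p,b)]) Hc IH).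
Qed.
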